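(* The following two statements are equivalent: (i) For every finite simple undirected graph $G$, the complete graph $K_{\chi(G)}$ is a minor of $G$. (ii) For every finite simple undirected graph $G$ that is not complete, there is a minor $M$ of $G$ such that $M \not\cong G$ and there is a graph homomorphism $G \to M$.
   Context: Graphs are simple and undirected: $G=(V,E)$ with $E \subseteq \{\{x,y\}: x,y\in V,\ x\neq y\}$. $\chi(G)$ denotes the chromatic number of $G$, i.e. the least cardinal $\lambda$ such that there is a graph homomorphism $G \to K_\lambda$; $K_\alpha$ is the complete graph on $\alpha$ vertices. Disjoint sets $S,T\subseteq V(G)$ are connected to each other if there are $s\in S$, $t\in T$ with $\{s,t\}\in E(G)$. For a collection $\mathcal D$ of pairwise disjoint, nonempty subsets of $V(G)$, each inducing a connected subgraph, let $G(\mathcal D)$ be the graph with vertex set $\mathcal D$ in which distinct $d,e\in\mathcal D$ are adjacent iff $d$ and $e$ are connected to each other. A graph $M$ is a minor of $G$ if there is such a collection $\mathcal D$ and an injective graph homomorphism $M \to G(\mathcal D)$. *)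

(* Defs.v *)
From mathcomp Require Import all_boot.
Set Implicit Arguments. Unset Strict Implicit. Unset Printing Implicit Defensive.

Definition simple_graph (T : finType) (e : rel T) : Prop :=
  symmetric e /\ irreflexive e.

Definition graph_hom (T U : finType) (eT : rel T) (eU : rel U) (f : T -> U) : Prop :=
  forall x y, eT x y -> eU (f x) (f y).

Definition K_rel (n : nat) : rel 'I_n := fun x y => x != y.

Definition complete_graph (T : finType) (e : rel T) : Prop :=
  forall x y : T, x != y -> e x y.

Definition colorableb (T : finType) (e : rel T) (n : nat) : bool :=
  [exists f : {ffun T -> 'I_n}, [forall x, forall y, e x y ==> K_rel (f x) (f y)]].

(* chromatic number: the least n with a homomorphism G -> K_n.
   Such an n always exists (n = #|T|) for loopless graphs; the fallback 0 is
   only used for graphs with loops, which never occur below. *)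
Definition chi (T : finType) (e : rel T) : nat :=
  (if colorableb e #|T| as b return (colorableb e #|T| = b -> nat)
   then fun h => ex_minn (ex_intro (colorableb e) #|T| h)
   else fun _ => 0) erefl.

Definition induces_connected (T : finType) (e : rel T) (S : {set T}) : Prop :=
  forall x y, x \in S -> y \in S ->
    connect [rel a b | [&& a \in S, b \in S & e a b]] x y.

Definition sets_connected (T : finType) (e : rel T) (S S' : {set T}) : Prop :=
  exists s t, [/\ s \in S, t \in S' & e s t].

Definition branch_collection (T : finType) (e : rel T) (D : {set {set T}}) : Prop :=
  [/\ (forall d, d \in D -> d != set0),
      (forall d, d \in D -> induces_connected e d) &
      (forall d d', d \in D -> d' \in D -> d != d' -> [disjoint d & d'])].

Definition GD_adj (T : finType) (e : rel T) (d d' : {set T}) : Prop :=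
  d != d' /\ sets_connected e d d'.

Definition is_minor (U : finType) (eM : rel U) (T : finType) (e : rel T) : Prop :=
  exists D : {set {set T}}, branch_collection e D /\
  exists f : U -> {set T},
    [/\ (forall u, f u \in D), injective f &
        (forall u v, eM u v -> GD_adj e (f u) (f v))].

Definition graph_iso (T U : finType) (eT : rel T) (eU : rel U) : Prop :=
  exists f : T -> U, bijective f /\ forall x y, eU (f x) (f y) = eT x y.

(* Main.v *)
Require Import Defs.
From mathcomp Require Import all_boot zify.
Set Implicit Arguments. Unset Strict Implicit.

Lemma arith k t E : E <= k^2 -> k < t -> k^3 + E < t^3.
Proof. move=> h1 h2. have h3 : k.+1 ^ 3 <= t ^ 3 by rewrite leq_exp2r.
move: h1 h3; rewrite !expnS !expn0 !muln1 => h1 h3. nia. Qed.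

Lemma connect_induct (T : finType) (R : rel T) (Q : T -> Prop) x y :
  connect R x y -> Q x -> (forall u v, R u v -> Q u -> Q v) -> Q y.
Proof.
move/connectP => [p pth ->] Qx step; elim: p x pth Qx => [//|z p IH] x /= /andP[rxz pth] Qx.
apply: IH pth _; exact: step Qx.
Qed.

Lemma minor_trans (A B C : finType) (eA : rel A) (eB : rel B) (eC : rel C) :
  is_minor eA eB -> is_minor eB eC -> is_minor eA eC.
Proof.
case=> D1 [[ne1 con1 dis1] [f1 [in1 inj1 adj1]]].
case=> D2 [[ne2 con2 dis2] [f2 [in2 inj2 adj2]]].
pose g a := \bigcup_(b in f1 a) f2 b.
have disf2 : forall b b' c, c \in f2 b -> c \in f2 b' -> b = b'.
  move=> b b' c Hb Hb'; apply/eqP; apply/negPn/negP => nbb.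
  have nf : f2 b != f2 b' by apply: contra nbb => /eqP /inj2 ->.
  by move: (disjointFr (dis2 _ _ (in2 b) (in2 b') nf) Hb); rewrite Hb'.
have disf1 : forall a a' b, b \in f1 a -> b \in f1 a' -> a = a'.
  move=> b b' c Hb Hb'; apply/eqP; apply/negPn/negP => nbb.
  have nf : f1 b != f1 b' by apply: contra nbb => /eqP /inj1 ->.
  by move: (disjointFr (dis1 _ _ (in1 b) (in1 b') nf) Hb); rewrite Hb'.
have gdis : forall a a' c, c \in g a -> c \in g a' -> a = a'.
  move=> a a' c /bigcupP[b Hb Hc] /bigcupP[b' Hb' Hc'].
  have Ebb := disf2 _ _ _ Hc Hc'; subst b'; exact: disf1 _ _ _ Hb Hb'.
have gne : forall a, exists c, c \in g a.
  move=> a; have /set0Pn [b Hb] := ne1 _ (in1 a).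
  have /set0Pn [c Hc] := ne2 _ (in2 b); by exists c; apply/bigcupP; exists b.
have ginj : injective g.
  move=> a a' Eg; have [c Hc] := gne a; apply: (gdis _ _ c Hc); by rewrite -Eg.
exists [set g a | a : A]; split; [split|].
- move=> d /imsetP[a _ ->]; have [c Hc] := gne a; by apply/set0Pn; exists c.
- move=> d /imsetP[a _ ->] x y /bigcupP[b Hb Hx] /bigcupP[b' Hb' Hy].
  set Rg := [rel _ _ | _].
  have lift : forall b0, b0 \in f1 a -> forall u v,
      connect [rel p q | [&& p \in f2 b0, q \in f2 b0 & eC p q]] u v -> connect Rg u v.
    move=> b0 Hb0 u v; apply: connect_sub => p q /and3P[hp hq hpq]; apply: connect1.
    rewrite /Rg /= hpq andbT; apply/andP; split; apply/bigcupP; by exists b0.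
  have : b' \in f1 a /\ forall z, z \in f2 b' -> connect Rg x z.
    apply: (@connect_induct _ _ (fun b1 => b1 \in f1 a /\ forall z, z \in f2 b1 -> connect Rg x z) _ _ (con1 _ (in1 a) b b' Hb Hb')).
      split => // z Hz; apply: lift Hb _ _ _; exact: con2 _ (in2 b) _ _ Hx Hz.
    move=> u v /and3P[hu hv huv] [_ Qu]; split => // z Hz.
    have [_ [s [t [Hs Ht est]]]] := adj2 _ _ huv.
    apply: connect_trans (Qu s Hs) _.
    apply: connect_trans (connect1 _) (lift v hv _ _ (con2 _ (in2 v) _ _ Ht Hz)).
    rewrite /Rg /= est andbT; apply/andP; split; apply/bigcupP; [exists u|exists v] => //.
  by case=> _; apply.
- move=> d d' /imsetP[a _ ->] /imsetP[a' _ ->] ne.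
  rewrite -setI_eq0; apply/eqP/setP => c; rewrite inE in_set0; apply/negP => /andP[h1 h2].
  by move: ne; rewrite (gdis _ _ _ h1 h2) eqxx.
- exists g; split => //.
  + by move=> a; apply/imsetP; exists a.
  + move=> a a' /adj1 [nf [b [b' [Hb Hb' eb]]]].
    have [_ [s [t [Hs Ht est]]]] := adj2 _ _ eb.
    split; first by apply: contra nf => /eqP /ginj ->.
    exists s, t; split => //; apply/bigcupP; by [exists b | exists b'].
Qed.

Lemma minor_K_le (T : finType) (e : rel T) n m :
  n <= m -> is_minor (@K_rel m) e -> is_minor (@K_rel n) e.
Proof.
move=> nm [D [bc [f [fin finj fadj]]]]; exists D; split => //.
have winj : injective (widen_ord nm).
  by move=> i j /(congr1 val) /= /val_inj.
exists (fun i => f (widen_ord nm i)); split => //.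
- by move=> i j /finj /winj.
- move=> i j nij; apply: fadj; rewrite /K_rel; apply: contra nij => /eqP/winj ->.
  exact: eqxx.
Qed.

Lemma minor_complete (T : finType) (e : rel T) :
  complete_graph e -> is_minor (@K_rel #|T|) e.
Proof.
move=> ce; exists [set [set x] | x : T]; split; [split|].
- move=> d /imsetP[x _ ->]; apply/set0Pn; exists x; exact: set11.
- move=> d /imsetP[x _ ->] y z; rewrite !inE => /eqP-> /eqP->; exact: connect0.
- move=> d d' /imsetP[x _ ->] /imsetP[y _ ->] ne; rewrite disjoints1 inE.
  by apply: contra ne => /eqP->.
- exists (fun i => [set enum_val i]); split.
  + by move=> i; apply/imsetP; exists (enum_val i).
  + by move=> i j /set1_inj /enum_val_inj.
  + move=> i j nij; split.
      by apply: contra nij => /eqP/set1_inj/enum_val_inj->.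
    exists (enum_val i), (enum_val j); split; rewrite ?set11 //; apply: ce.
    by apply: contra nij => /eqP/enum_val_inj ->.
Qed.
Lemma colorable_card (T : finType) (e : rel T) : simple_graph e -> colorableb e #|T|.
Proof.
case=> _ irr; apply/existsP; exists [ffun x => enum_rank x].
apply/forallP => x; apply/forallP => y; apply/implyP => exy.
rewrite /K_rel !ffunE; apply/negP => /eqP /enum_rank_inj Exy.
by move: exy; rewrite Exy irr.
Qed.
Lemma dep_if_true (c : bool) (H : c) (A : c = true -> nat) (B : c = false -> nat) :
  (if c as b return (c = b -> nat) then A else B) erefl = A H.
Proof. by case: c H A B => // H A B; rewrite (eq_irrelevance H erefl). Qed.

Lemma chi_spec (T : finType) (e : rel T) : simple_graph e ->
  colorableb e (chi e) /\ forall n, colorableb e n -> chi e <= n.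
Proof.
move=> /colorable_card H.
rewrite /chi (@dep_if_true _ H).
case: ex_minnP => m Hm Hmin; split => // n; exact: Hmin.
Qed.

Lemma chi_hom (T U : finType) (e : rel T) (eM : rel U) (f : T -> U) :
  simple_graph e -> simple_graph eM -> graph_hom e eM f -> chi e <= chi eM.
Proof.
move=> se sM hf; have [cM _] := chi_spec sM; have [_ mn] := chi_spec se; apply: mn.
move/existsP: cM => [c Hc]; apply/existsP; exists [ffun x => c (f x)].
apply/forallP => x; apply/forallP => y; apply/implyP => exy; rewrite !ffunE.
exact: (implyP (forallP (forallP Hc (f x)) (f y)) (hf _ _ exy)).
Qed.

Definition nedges (T : finType) (e : rel T) := #|[set p : T * T | e p.1 p.2]|.
Definition mu (T : finType) (e : rel T) := #|T| ^ 3 + nedges e.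

Lemma nedges_le (T : finType) (e : rel T) : nedges e <= #|T| ^ 2.
Proof. by rewrite /nedges expnS expn1 -card_prod max_card. Qed.

Lemma minor_smaller (T U : finType) (e : rel T) (eM : rel U) :
  is_minor eM e -> ~ graph_iso eM e -> mu eM < mu e.
Proof.
case=> D [[ne con dis] [f [fin finj fadj]]] niso.
have ex : forall u, exists x, x \in f u.
  by move=> u; apply/set0Pn; exact: ne _ (fin u).
pose h u := xchoose (ex u).
have hin : forall u, h u \in f u := fun u => xchooseP (ex u).
have fdis : forall u u' x, x \in f u -> x \in f u' -> u = u'.
  move=> b b' c Hb Hb'; apply/eqP; apply/negPn/negP => nbb.
  have nf : f b != f b' by apply: contra nbb => /eqP /finj ->.
  by move: (disjointFr (dis _ _ (fin b) (fin b') nf) Hb); rewrite Hb'.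
have hinj : injective h.
  move=> u u' E; apply: (fdis u u' (h u)) => //; rewrite E; exact: hin.
have [lt|ge] := ltnP #|U| #|T|.
  rewrite /mu; apply: leq_trans (leq_addr _ _).
  exact: arith (@nedges_le _ eM) lt.
have hbij := inj_card_bij hinj ge.
have eqc : #|U| = #|T| by apply/eqP; rewrite eqn_leq ge andbT; exact: leq_card hinj.
have fh : forall u x, x \in f u -> x = h u.
  move=> u x Hx; case: hbij => h' hK Kh.
  have := hin (h' x); rewrite Kh => Hx'.
  by move: (fdis u (h' x) x Hx Hx') => E; rewrite -[LHS]Kh -E.
have edge : forall u v, eM u v -> e (h u) (h v).
  by move=> u v /fadj [_ [s [t [Hs Ht est]]]]; rewrite -(fh _ _ Hs) -(fh _ _ Ht).
pose k (p : U * U) := (h p.1, h p.2).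
have kinj : injective k.
  by move=> [a b] [c d] /= [/hinj -> /hinj ->].
have sub : k @: [set p : U * U | eM p.1 p.2] \subset [set p : T * T | e p.1 p.2].
  by apply/subsetP => q /imsetP[p]; rewrite !inE => Hp ->; exact: edge.
have := subset_leqif_cards sub; rewrite card_imset // => -[le eqb].
rewrite /mu eqc ltn_add2l ltn_neqAle le andbT /nedges eqb.
apply/negP => /eqP E; apply: niso; exists h; split => // x y.
apply/idP/idP; last exact: edge.
move=> exy; have : (h x, h y) \in k @: [set p : U * U | eM p.1 p.2].
  by rewrite E inE.
by case/imsetP => -[a b]; rewrite inE /= => Hab [/hinj -> /hinj ->].
Qed.

Lemma ii_to_i
  (Hii : forall (T : finType) (e : rel T), simple_graph e -> ~ complete_graph e ->
      exists (U : finType) (eM : rel U),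
        [/\ simple_graph eM, is_minor eM e, ~ graph_iso eM e &
            exists f : T -> U, graph_hom e eM f]) :
  forall n (T : finType) (e : rel T), mu e < n -> simple_graph e ->
      is_minor (@K_rel (chi e)) e.
Proof.
elim=> // n IH T e lt se.
have [_ mn] := chi_spec se.
case: (boolP [forall x, forall y, (x != y) ==> e x y]) => Hc.
  have ce : complete_graph e.
    by move=> x y nxy; exact: (implyP (forallP (forallP Hc x) y) nxy).
  exact: minor_K_le (mn _ (colorable_card se)) (minor_complete ce).
have nce : ~ complete_graph e.
  move=> ce; move/negP: Hc; apply; apply/forallP => x; apply/forallP => y.
  apply/implyP; exact: ce.
have [U [eM [sM mM niso [f hf]]]] := Hii T e se nce.
have ltM : mu eM < n by have := minor_smaller mM niso; lia.
have := IH U eM ltM sM => mK.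
exact: minor_K_le (chi_hom se sM hf) (minor_trans mK mM).
Qed.

Theorem mainTheorem2 :
  (forall (T : finType) (e : rel T), simple_graph e ->
      is_minor (@K_rel (chi e)) e)
  <->
  (forall (T : finType) (e : rel T), simple_graph e -> ~ complete_graph e ->
      exists (U : finType) (eM : rel U),
        [/\ simple_graph eM, is_minor eM e, ~ graph_iso eM e &
            exists f : T -> U, graph_hom e eM f]).
Proof.
split.
- move=> Hi T e se nce.
  exists 'I_(chi e), (@K_rel (chi e)); split.
  + split; first by move=> x y; rewrite /K_rel eq_sym.
    by move=> x; rewrite /K_rel eqxx.
  + exact: Hi.
  + move=> [h [hbij hE]]; apply: nce => x y nxy.
    case: hbij => h' hK Kh.
    rewrite -(Kh x) -(Kh y) hE /K_rel.
    by apply: contra nxy => /eqP E; rewrite -(Kh x) -(Kh y) E.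
  + have [cM _] := chi_spec se.
    move/existsP: cM => [c Hc]; exists c => x y exy.
    exact: (implyP (forallP (forallP Hc x) y) exy).
- move=> Hii T e se.
  exact: (ii_to_i Hii (n := (mu e).+1)).
Qed.
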